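(* Let $n\ge2$, let $W:\{0,1,\dots,n\}\to\mathbb{R}$ be nonnegative, nondecreasing and concave with $W(0)=0$, and let $\rho\ge1$. Define $F:\{1,\dots,n\}\to\mathbb{R}$ by $F(1)=W(1)$ and, for $j=1,\dots,n-1$, $$F(j+1)=\max_{\ell\in\{1,\dots,n\}}\frac{\min\{j,n-\ell\}F(j)-W(j)\rho+W(\ell)}{\min\{\ell,n-j\}}.$$ If $\hat j\in\{1,\dots,n-1\}$ is the smallest index with $F(\hat j+1)>F(\hat j)$, then $F(j+1)>F(j)$ for all $j=\hat j,\dots,n-1$. *)

(* Defs.v *)
From mathcomp Require Import all_boot all_order all_algebra.
Set Implicit Arguments. Unset Strict Implicit. Unset Printing Implicit Defensive.
Import Order.TTheory GRing.Theory Num.Theory.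
Local Open Scope ring_scope.

(* W : {0,...,n} -> R, represented as W : nat -> R (values beyond n unused). *)
Definition nonneg_on (R : realFieldType) (n : nat) (W : nat -> R) : Prop :=
  forall i : nat, (i <= n)%N -> 0 <= W i.

Definition nondecr_on (R : realFieldType) (n : nat) (W : nat -> R) : Prop :=
  forall i : nat, (i < n)%N -> W i <= W i.+1.

Definition concave_on (R : realFieldType) (n : nat) (W : nat -> R) : Prop :=
  forall i : nat, (1 <= i)%N -> (i < n)%N -> W i.+1 - W i <= W i - W i.-1.

Definition Fterm (R : realFieldType) (n : nat) (W : nat -> R) (rho : R)
    (Fj : R) (j l : nat) : R :=
  ((minn j (n - l))%:R * Fj - W j * rho + W l) / (minn l (n - j))%:R.

(* F(1) = W(1); F(j+1) = max_{l in 1..n} Fterm ... ; F 0 is an unused dummy *)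
Fixpoint F (R : realFieldType) (n : nat) (W : nat -> R) (rho : R) (k : nat) : R :=
  match k with
  | 0 => 0
  | 1 => W 1%N
  | (j.+1 as k').+1 =>
      let g := Fterm n W rho (F n W rho k') k' in
      \big[Num.max/g 1%N]_(1 <= l < n.+1) g l
  end.

(* Main.v *)
Require Import Defs.
From mathcomp Require Import all_boot all_order all_algebra.
From mathcomp Require Import zify ring lra.
Import Order.TTheory GRing.Theory Num.Theory.
Local Open Scope ring_scope.

Section Aux.
Variable R : realFieldType.

Lemma big_lower_seq (g : nat -> R) (x0 : R) (s : seq nat) (l : nat) :
  l \in s -> g l <= \big[Num.max/x0]_(i <- s) g i.
Proof.
elim: s => [//|a s IH]; rewrite in_cons big_cons le_max => /orP [/eqP ->|h].
  by rewrite lexx.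
by rewrite IH ?orbT.
Qed.

Lemma big_arg_seq (g : nat -> R) (x0 : R) (s : seq nat) :
  \big[Num.max/x0]_(i <- s) g i = x0 \/
  exists2 l, l \in s & \big[Num.max/x0]_(i <- s) g i = g l.
Proof.
elim: s => [|a s IH]; first by left; rewrite big_nil.
rewrite big_cons.
case: IH => [e|[l hl e]]; rewrite e; case: lerP => h.
- by left.
- by right; exists a; rewrite ?mem_head.
- by right; exists l; rewrite // in_cons hl orbT.
- by right; exists a; rewrite ?mem_head.
Qed.

Lemma big_lower (g : nat -> R) (N l : nat) :
  (1 <= l)%N -> (l <= N)%N -> g l <= \big[Num.max/g 1%N]_(1 <= i < N.+1) g i.
Proof.
move=> h1 h2; apply: big_lower_seq; rewrite mem_index_iota; lia.
Qed.

Lemma big_arg (g : nat -> R) (N : nat) : (1 <= N)%N ->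
  exists l, [/\ (1 <= l)%N, (l <= N)%N & \big[Num.max/g 1%N]_(1 <= i < N.+1) g i = g l].
Proof.
move=> hN; case: (big_arg_seq g (g 1%N) (index_iota 1 N.+1)) => [e|[l hl e]].
  by exists 1%N; split => //.
by exists l; move: hl; rewrite mem_index_iota => hl; split => //; lia.
Qed.

Lemma F_rec n (W : nat -> R) (rho : R) j : F n W rho j.+2 =
  \big[Num.max/Fterm n W rho (F n W rho j.+1) j.+1 1%N]_(1 <= l < n.+1)
     Fterm n W rho (F n W rho j.+1) j.+1 l.
Proof. by []. Qed.

End Aux.

Theorem lemma3 (R : realFieldType) (n : nat) (W : nat -> R) (rho : R)
  (hn : (2 <= n)%N)
  (hW0 : W 0%N = 0)
  (hWnn : nonneg_on n W) (hWinc : nondecr_on n W) (hWcc : concave_on n W)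
  (hrho : 1 <= rho)
  (jh : nat) (hjh1 : (1 <= jh)%N) (hjh2 : (jh <= n - 1)%N)
  (hjh_inc : F n W rho jh < F n W rho jh.+1)
  (hjh_min : forall j : nat, (1 <= j)%N -> (j < jh)%N -> F n W rho j.+1 <= F n W rho j) :
  forall j : nat, (jh <= j)%N -> (j <= n - 1)%N -> F n W rho j < F n W rho j.+1.
Proof.
pose d i := W i.+1 - W i.
have dge0 : forall i, (i < n)%N -> 0 <= d i.
  by move=> i hi; rewrite /d subr_ge0; apply: hWinc.
have LD : forall i k, (i <= k)%N -> (k < n)%N -> d k <= d i.
  move=> i; elim=> [|k IH] hik hk.
    by have -> : i = 0%N by lia.
  have [->|hne] := eqVneq i k.+1; first by [].
  have h1 := IH ltac:(lia) ltac:(lia).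
  have h2 := hWcc k.+1 ltac:(lia) hk.
  rewrite /d /=; rewrite /d in h1; simpl in h2; lra.
have LA : forall i k, (i <= k)%N -> (k <= n)%N -> W k - W i <= (k - i)%:R * d i.
  move=> i; elim=> [|k IH] hik hk.
    have -> : i = 0%N by lia. by rewrite subrr mul0r.
  have [->|hne] := eqVneq i k.+1; first by rewrite subrr subnn mul0r.
  have h1 := IH ltac:(lia) ltac:(lia).
  have h2 := LD i k ltac:(lia) ltac:(lia).
  rewrite subSn; last by lia.
  rewrite -natr1. rewrite /d in h1 h2 *. lra.
have LB : forall l j, (l <= j)%N -> (j < n)%N -> (j - l)%:R * d j <= W j - W l.
  move=> l; elim=> [|j IH] hlj hj.
    have -> : l = 0%N by lia. by rewrite subrr mul0r.
  have [->|hne] := eqVneq l j.+1; first by rewrite subrr subnn mul0r.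
  have h1 := IH ltac:(lia) ltac:(lia).
  have h2 := LD j j.+1 ltac:(lia) hj.
  have h3 : 0 <= (j - l)%:R * (d j - d j.+1) :> R.
    by apply: mulr_ge0; [apply: ler0n | rewrite subr_ge0].
  rewrite subSn; last by lia.
  rewrite -natr1. rewrite /d in h1 h2 h3 *. nra.
have mpos : forall j l, (1 <= l)%N -> (j < n)%N -> (0 < (minn l (n - j))%:R :> R).
  by move=> j l h1 h2; rewrite ltr0n; lia.
have Flow : forall j l, (1 <= j)%N -> (j < n)%N -> (1 <= l)%N -> (l <= n)%N ->
   (minn j (n - l))%:R * F n W rho j - W j * rho + W l
     <= F n W rho j.+1 * (minn l (n - j))%:R.
  move=> [//|j] l h1 h2 h3 h4.
  rewrite -ler_pdivrMr; last exact: mpos.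
  rewrite F_rec; apply: big_lower => //.
have Farg : forall j, (1 <= j)%N -> (j < n)%N -> exists l, [/\ (1 <= l)%N, (l <= n)%N &
   (minn j (n - l))%:R * F n W rho j - W j * rho + W l
     = F n W rho j.+1 * (minn l (n - j))%:R].
  move=> [//|j] h1 h2.
  have [l [hl1 hl2 e]] := @big_arg _ (Fterm n W rho (F n W rho j.+1) j.+1) n ltac:(lia).
  exists l; split => //.
  rewrite F_rec e /Fterm mulfVK //.
  by apply: lt0r_neq0; apply: mpos.
have Inv : forall j, (1 <= j)%N -> (j <= n)%N -> forall l, (j < l)%N -> (l <= n)%N ->
    W l - W j * rho <= (l - j)%:R * F n W rho j.
  elim=> [//|j IH] h1 h2 l hl1 hl2.
  case: j IH h1 h2 hl1 => [|j] IH h1 h2 hl1.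
    have h := LA 0%N l ltac:(lia) hl2.
    rewrite /d hW0 subr0 subn0 /= in h *.
    have hW1 := hWnn 1%N ltac:(lia).
    have : (l%:R : R) = (l - 1)%:R + 1 by rewrite natr1; congr (_%:R); lia.
    move=> el; rewrite el in h; nra.
  have I := IH ltac:(lia) ltac:(lia).
  set x := F n W rho j.+1; set y := F n W rho j.+2.
  have hlow := Flow j.+1 l.-1 ltac:(lia) ltac:(lia) ltac:(lia) ltac:(lia).
  have hI := I l.-1 ltac:(lia) ltac:(lia).
  rewrite -/x in hI.
  have em : minn l.-1 (n - j.+1) = (minn j.+1 (n - l.-1) + (l.-1 - j.+1))%N by lia.
  rewrite em natrD -/x -/y in hlow.
  have ek : (l - j.+2 = l.-1 - j.+1)%N by lia.
  rewrite ek.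
  have hW : W l - W j.+2 * rho <= W l.-1 - W j.+1 * rho.
    have h1' := LD j.+1 l.-1 ltac:(lia) ltac:(lia).
    have h2' := dge0 j.+1 ltac:(lia).
    have e' : l = l.-1.+1 by lia.
    rewrite /d -e' in h1'. rewrite /d in h2'. nra.
  set a := (minn j.+1 (n - l.-1))%:R : R in hlow.
  set k := (l.-1 - j.+1)%:R : R in hlow hI *.
  have ha : 0 <= a by apply: ler0n.
  have hk : 0 <= k by apply: ler0n.
  have [hxy|hxy] := leP x y.
    have : k * x <= k * y by apply: ler_wpM2l.
    move=> hh; lra.
  have : a * y <= a * x by apply: ler_wpM2l => //; apply: ltW.
  nra.
have Step : forall j, (1 <= j)%N -> (j.+2 <= n)%N ->
    F n W rho j < F n W rho j.+1 -> F n W rho j.+1 < F n W rho j.+2.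
  move=> j h1 h2 hxy.
  have [l [hl1 hl2 e]] := Farg j h1 ltac:(lia).
  set x := F n W rho j in hxy e; set y := F n W rho j.+1 in hxy e *.
  have hm := mpos j l hl1 ltac:(lia).
  have hxy' : 0 < y - x by rewrite subr_gt0.
  have hmy := mulr_gt0 hm hxy'.
  have [hjl|hlj] := ltnP j l.
    have hI := Inv j h1 ltac:(lia) l hjl hl2.
    have em : minn l (n - j) = (minn j (n - l) + (l - j))%N by lia.
    rewrite em natrD in e hmy; rewrite -/x in hI.
    have ha : 0 <= (minn j (n - l))%:R :> R by apply: ler0n.
    lra.
  set A := (minn j (n - l))%:R : R in e.
  set M := (minn l (n - j))%:R : R in e hm hmy.
  set K := (j - l)%:R : R.
  have hMA : M <= A by rewrite ler_nat; lia.
  have hAK : A <= M + K by rewrite -natrD ler_nat; lia.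
  have hLB := LB l j hlj ltac:(lia).
  rewrite -/K in hLB.
  have hWl := hWnn l hl2.
  have hd := dge0 j ltac:(lia).
  set P := rho * d j.
  have hP : 0 <= P by apply: mulr_ge0 => //; lra.
  have q1 : W j * rho - W l < (A - M) * x by lra.
  have q2 : K * P <= W j * rho - W l.
    have r1 : 0 <= (rho - 1) * W l by apply: mulr_ge0 => //; lra.
    have r2 : 0 <= rho * (W j - W l - K * d j) by apply: mulr_ge0; lra.
    rewrite /P; lra.
  have hx : P < x.
    rewrite ltNge; apply/negP => hxP.
    have r1 : 0 <= (A - M) * (P - x) by apply: mulr_ge0; lra.
    have r2 : 0 <= (M + K - A) * P by apply: mulr_ge0; lra.
    lra.
  have hF := Flow j.+1 l isT h2 hl1 hl2.
  have hM2 : 0 < (minn l (n - j.+1))%:R :> R by rewrite ltr0n; clear -hl1 h2; lia.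
  have eid : (minn j.+1 (n - l))%:R + M = A + (minn l (n - j.+1))%:R + 1 :> R.
    by rewrite /M /A -!natrD natr1; congr (_%:R); clear -hl1 h2 hlj; lia.
  have hA : 0 <= A by apply: ler0n.
  have eP : W j.+1 * rho = W j * rho + P by rewrite /P /d; ring.
  move: hF eid hM2; rewrite -/y.
  move: (F n W rho j.+2) ((minn j.+1 (n - l))%:R : R) ((minn l (n - j.+1))%:R : R) => Fz A2 M2 hF eid hM2.
  have r3 : 0 <= A * (y - x) by apply: mulr_ge0; lra.
  have eidy : (A2 + M) * y = (A + M2 + 1) * y by rewrite eid.
  have : y * M2 < Fz * M2.
    clear -hF eidy eP e r3 hx hxy; lra.
  by rewrite ltr_pM2r.
have Final : forall j, (jh <= j)%N -> (j <= n - 1)%N -> F n W rho j < F n W rho j.+1.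
  elim=> [|j IH] h1 h2; first by lia.
  have [<-|hne] := eqVneq jh j.+1; first by [].
  apply: Step; [lia | lia | apply: IH; lia].
exact: Final.
Qed.
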